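(* Work in homotopy type theory with univalence and function extensionality. For any $f : A \to B$ there are maps (1) $\mathsf{adj}\, f \to \mathsf{ish2adj}\, f$ and (2) $\mathsf{adj}\, f \to \mathsf{ish2adjl}\, f$, where \[ \mathsf{adj}\, f :\equiv \sum_{g : B \to A} \ \sum_{\eta : gf \sim \mathsf{id}_A} \ \sum_{\varepsilon : fg \sim \mathsf{id}_B} \big(f[\eta] \sim \varepsilon_f\big) \times \big(\eta_g \sim g[\varepsilon]\big), \] \[ \mathsf{ish2adj}\, f :\equiv \sum_{g, \eta, \varepsilon} \ \sum_{\tau : f[\eta] \sim \varepsilon_{f}} \ \sum_{\theta : \eta_{g} \sim g[\varepsilon]} \big(\mathsf{Coh}\, \eta \cdot g \llbracket \tau \rrbracket \sim \theta_f\big), \qquad \mathsf{ish2adjl}\, f :\equiv \sum_{g, \eta, \varepsilon} \ \sum_{\tau : f[\eta] \sim \varepsilon_{f}} \ \sum_{\theta : \eta_{g} \sim g[\varepsilon]} \big(\tau_{g} \cdot \mathsf{Coh}\, \varepsilon \sim f \llbracket \theta \rrbracket\big), \] with $g : B \to A$, $\eta : gf \sim \mathsf{id}_A$, $\varepsilon : fg \sim \mathsf{id}_B$.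
   Context: Notation: for $h : X \to Y$ and a path $p$, $h[p]$ denotes $\mathsf{ap}_h(p)$; for 2-paths $\alpha : p = q$, $h\llbracket \alpha \rrbracket : h[p] = h[q]$ is the action on 2-paths. A homotopy $H : F \sim G$ is an element of $\prod_x Fx = Gx$; $H_k := \lambda c.\, H_{kc}$, $h[H] := \lambda x.\, h[H_x]$, $h\llbracket \alpha\rrbracket := \lambda x.\, h\llbracket \alpha_x\rrbracket$ for $\alpha : H \sim H'$; $\cdot$ is pointwise concatenation in diagrammatic order. For maps $u : X \to Y$, $v : Y \to X$ and $H : vu \sim \mathsf{id}_X$, $\mathsf{Coh}\, H : H_{vu} \sim v[u[H]]$ is defined pointwise: $(\mathsf{Coh}\, H)_x$ is the concatenation of the path $H_{v(ux)} = (vu)[H_x]$ given by naturality of $H$ (applied to $H_x$, cancelling $H_x$) with the functoriality path $(vu)[H_x] = v[u[H_x]]$. $\mathsf{Coh}\,\eta$ uses $(u,v,H)=(f,g,\eta)$ and $\mathsf{Coh}\,\varepsilon$ uses $(u,v,H)=(g,f,\varepsilon)$. *)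

(* Defs.v *)
Set Implicit Arguments.

Inductive paths {A : Type} (a : A) : A -> Type := idpath : paths a a.
Arguments idpath {A a}.

Definition concat {A : Type} {x y z : A} (p : paths x y) (q : paths y z) : paths x z :=
  match q in paths _ z return paths x z with idpath => p end.

Definition inv {A : Type} {x y : A} (p : paths x y) : paths y x :=
  match p in paths _ y return paths y x with idpath => idpath end.

Definition ap {X Y : Type} (h : X -> Y) {x y : X} (p : paths x y) : paths (h x) (h y) :=
  match p in paths _ y return paths (h x) (h y) with idpath => idpath end.

Definition ap2 {X Y : Type} (h : X -> Y) {x y : X} {p q : paths x y}
  (alpha : paths p q) : paths (ap h p) (ap h q) := ap (ap h) alpha.

Definition homotopy {X : Type} {P : X -> Type} (F G : forall x, P x) : Type :=
  forall x, paths (F x) (G x).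

Definition concat_1p {A : Type} {x y : A} (p : paths x y) : paths (concat idpath p) p :=
  match p in paths _ y return paths (concat idpath p) p with idpath => idpath end.

Definition htpy_natural {X : Type} {F : X -> X} (H : forall x, paths (F x) x)
  {a b : X} (p : paths a b) : paths (concat (ap F p) (H b)) (concat (H a) p) :=
  match p in paths _ b return paths (concat (ap F p) (H b)) (concat (H a) p) with
  | idpath => concat_1p (H a) end.

Definition cancelR {A : Type} {x y z : A} (p q : paths x y) (r : paths y z)
  (e : paths (concat p r) (concat q r)) : paths p q :=
  match r as r0 in paths _ z0
        return paths (concat p r0) (concat q r0) -> paths p q with
  | idpath => fun e0 => e0 end e.

Definition ap_compose {X Y Z : Type} (u : X -> Y) (v : Y -> Z) {x y : X} (p : paths x y) :
  paths (ap (fun t => v (u t)) p) (ap v (ap u p)) :=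
  match p in paths _ y return paths (ap (fun t => v (u t)) p) (ap v (ap u p)) with
  | idpath => idpath end.

Definition Coh {X Y : Type} {u : X -> Y} {v : Y -> X}
  (H : forall x, paths (v (u x)) x) :
  forall x, paths (H (v (u x))) (ap v (ap u (H x))) :=
  fun x => concat
    (inv (cancelR (ap (fun t => v (u t)) (H x)) (H (v (u x))) (H x)
                  (htpy_natural H (H x))))
    (ap_compose u v (H x)).

Definition adj {A B : Type} (f : A -> B) : Type :=
  { g : B -> A &
  { eta : forall a, paths (g (f a)) a &
  { eps : forall b, paths (f (g b)) b &
    ((forall a, paths (ap f (eta a)) (eps (f a))) *
     (forall b, paths (eta (g b)) (ap g (eps b))))%type } } }.

Definition ish2adj {A B : Type} (f : A -> B) : Type :=
  { g : B -> A &
  { eta : forall a, paths (g (f a)) a &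
  { eps : forall b, paths (f (g b)) b &
  { tau : forall a, paths (ap f (eta a)) (eps (f a)) &
  { theta : forall b, paths (eta (g b)) (ap g (eps b)) &
    forall a, paths (concat (Coh (u := f) (v := g) eta a) (ap2 g (tau a)))
                    (theta (f a)) } } } } }.

Definition ish2adjl {A B : Type} (f : A -> B) : Type :=
  { g : B -> A &
  { eta : forall a, paths (g (f a)) a &
  { eps : forall b, paths (f (g b)) b &
  { tau : forall a, paths (ap f (eta a)) (eps (f a)) &
  { theta : forall b, paths (eta (g b)) (ap g (eps b)) &
    forall b, paths (concat (tau (g b)) (Coh (u := g) (v := f) eps b))
                    (ap2 f (theta b)) } } } } }.

Definition happly {X : Type} {P : X -> Type} {h k : forall x, P x}
  (e : paths h k) : forall x, paths (h x) (k x) :=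
  match e in paths _ k return forall x, paths (h x) (k x) with
  | idpath => fun x => idpath end.

Definition IsEquiv {X Y : Type} (m : X -> Y) : Type :=
  ({ s : Y -> X & forall y, paths (m (s y)) y } *
   { r : Y -> X & forall x, paths (r (m x)) x })%type.

Definition Funext : Type :=
  forall (X : Type) (P : X -> Type) (h k : forall x, P x), IsEquiv (@happly X P h k).

(* Main.v *)
Require Import Defs.

Definition transp {X : Type} (P : X -> Type) {x y : X} (p : paths x y) (u : P x) : P y :=
  match p in paths _ y return P y with idpath => u end.

Definition apd_f {X Y : Type} (h : X -> Y) (P : Y -> Type) (s : forall a, P (h a))
  {a a' : X} (p : paths a a') : paths (transp P (ap h p) (s a)) (s a') :=
  match p in paths _ a' return paths (transp P (ap h p) (s a)) (s a') with
  | idpath => idpath end.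

Definition transp_path {X : Type} (P : X -> Type) {x y : X} {p q : paths x y}
  (e : paths p q) (u : P x) : paths (transp P p u) (transp P q u) :=
  match e in paths _ q return paths (transp P p u) (transp P q u) with
  | idpath => idpath end.

Definition concat_V_p {X : Type} {x y z : X} (a : paths x z) (b : paths y z) :
  paths (concat (concat a (inv b)) b) a :=
  match b as b0 in paths _ z0 return forall a0 : paths x z0,
     paths (concat (concat a0 (inv b0)) b0) a0 with
  | idpath => fun a0 => idpath end a.

Definition concat_pp {X : Type} {x y z : X} {p q : paths x y} (e : paths p q) (r : paths y z)
  : paths (concat p r) (concat q r) := ap (fun t => concat t r) e.

Definition etrans {X : Type} {x y z : X} (p : paths x y) (q : paths y z) := concat p q.

Theorem corollary3p10 (funext : Funext) (A B : Type) (f : A -> B) :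
  ((adj f -> ish2adj f) * (adj f -> ish2adjl f))%type.
Proof.
  split.
  - intros [g [eta [eps [tau theta0]]]].
    pose (P := fun b => paths (eta (g b)) (ap g (eps b))).
    pose (s := fun a => concat (Coh (u := f) (v := g) eta a) (ap2 g (tau a)) : P (f a)).
    exists g, eta, eps, tau, (fun b => transp P (eps b) (s (g b))).
    intro a. apply inv.
    exact (concat (transp_path P (inv (tau a)) (s (g (f a)))) (apd_f f P s (eta a))).
  - intros [g [eta [eps [tau0 theta]]]].
    pose (Q := fun a => paths (ap f (eta a)) (eps (f a))).
    pose (r := fun b => concat (ap2 f (theta b)) (inv (Coh (u := g) (v := f) eps b)) : Q (g b)).
    exists g, eta, eps, (fun a => transp Q (eta a) (r (f a))), theta.
    intro b.
    refine (concat (concat_pp _ _) (concat_V_p _ _)).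
    exact (concat (transp_path Q (theta b) (r (f (g b)))) (apd_f g Q r (eps b))).
Qed.
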